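(* Let $n\ge 4$ and let $L=(l_1,\dots,l_n)$ be a generic length vector satisfying the strict triangle inequality. For $k=1,\dots,n$ let $N_k$ denote the number of short subsets of $[n]$ of cardinality $k$. Then the number of vertices of $\Gamma(L)$ equals $$\sum_{k=1}^n N_k\,2^{\,n-k}\;-\;2\cdot 3^{\,n-1}\;+\;2^n .$$
   Context: Let $n\ge 4$ and $L=(l_1,\dots,l_n)$ be positive reals with $l_i<\sum_{j\ne i}l_j$ for every $i$ (strict triangle inequality), and generic: there is no $J\subseteq[n]$ with $\sum_{i\in J}l_i=\sum_{i\notin J}l_i$. Here $[n]=\{1,\dots,n\}$ and $|L|=\sum_{i=1}^n l_i$. A set $I\subseteq[n]$ is short if $\sum_{i\in I}l_i<|L|/2$ and long otherwise. A cyclically ordered partition of $[n]$ into $k$ parts is a sequence $(A_1,\dots,A_k)$ of pairwise disjoint nonempty sets with union $[n]$, considered up to cyclic shifts $(A_1,\dots,A_k)\sim(A_2,\dots,A_k,A_1)$; there is no ordering inside a part. It is admissible if every part is short. The graph $\Gamma(L)$ has as vertices the admissible cyclically ordered partitions of $[n]$ into 3 parts, written $(I,J,K)$, and as edges the admissible cyclically ordered partitions into 4 parts $(A,B,C,D)$; such an edge is incident to each of the partitions $(A\cup B,C,D)$, $(A,B\cup C,D)$, $(A,B,C\cup D)$, $(D\cup A,B,C)$ that is admissible. Equivalently, two vertices are adjacent iff one is obtained from the other by moving a nonempty proper subset of one part into another part. ($\Gamma(L)$ is the 1-skeleton of a cell decomposition of the moduli space of planar configurations of $L$.) *)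

(* Defs.v *)
From HB Require Import structures.
From mathcomp Require Import all_boot all_order all_algebra.
Set Implicit Arguments. Unset Strict Implicit. Unset Printing Implicit Defensive.
Import Order.TTheory GRing.Theory Num.Theory.
Local Open Scope ring_scope.

Section Linkage.
Variables (R : realFieldType) (n : nat) (l : 'I_n -> R).

Definition totlen : R := \sum_(i < n) l i.

Definition short (I : {set 'I_n}) : bool := \sum_(i in I) l i < totlen / 2%:R.

Definition positive_lengths : Prop := forall i, 0 < l i.

Definition strict_triangle : Prop :=
  forall i, l i < \sum_(j < n | j != i) l j.

Definition generic : Prop :=
  forall J : {set 'I_n}, \sum_(i in J) l i != \sum_(i in ~: J) l i.

Definition triple := ({set 'I_n} * {set 'I_n} * {set 'I_n})%type.

Definition admissible3 (t : triple) : bool :=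
  let I := t.1.1 in let J := t.1.2 in let K := t.2 in
  [&& I != set0, J != set0, K != set0,
      [disjoint I & J], [disjoint J & K], [disjoint I & K],
      I :|: J :|: K == setT &
      [&& short I, short J & short K]].

Definition rot3 (t : triple) : triple :=
  (t.1.2, t.2, t.1.1).

Definition cyc_class (t : triple) : {set triple} :=
  [set t; rot3 t; rot3 (rot3 t)].

(* vertices of Gamma(L): admissible cyclically ordered partitions into 3 parts,
   i.e. classes of admissible ordered triples up to cyclic shift *)
Definition vertices : {set {set triple}} :=
  [set cyc_class t | t in [pred t | admissible3 t]].

Definition Nshort (k : nat) : nat := #|[set I : {set 'I_n} | short I & #|I| == k]|.

End Linkage.

(* Main.v *)
Require Import Defs.
From HB Require Import structures.
From mathcomp Require Import all_boot all_order all_algebra.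
From mathcomp Require Import zify ring lra.
Import Order.TTheory GRing.Theory Num.Theory.
Set Implicit Arguments. Unset Strict Implicit. Unset Printing Implicit Defensive.

Local Open Scope ring_scope.

Lemma sumC_tot (R : realFieldType) n (l : 'I_n -> R) (A : {set 'I_n}) :
  \sum_(i in A) l i + \sum_(i in ~: A) l i = totlen l.
Proof.
rewrite /totlen [RHS](bigID (fun i => i \in A)) /=.
by congr (_ + _); apply: eq_bigl => i; rewrite ?inE.
Qed.

Lemma short_compl (R : realFieldType) n (l : 'I_n -> R) (A : {set 'I_n}) :
  generic l -> short l (~: A) = ~~ short l A.
Proof.
move=> hg; have := hg A; have := sumC_tot l A; rewrite /short.
set a := \sum_(i in A) l i; set b := \sum_(i in ~: A) l i => e.
case: (ltgtP a (totlen l / 2%:R)) => h.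
- move=> _; have -> : (b < totlen l / 2%:R) = false by apply/negbTE; rewrite -leNgt; lra.
  by [].
- move=> _; have -> : (b < totlen l / 2%:R) by lra.
  by [].
- by move=> /eqP []; lra.
Qed.

Lemma short_sub (R : realFieldType) n (l : 'I_n -> R) (A B : {set 'I_n}) :
  positive_lengths l -> A \subset B -> short l B -> short l A.
Proof.
move=> hp sAB; rewrite /short (big_setID (A := B) A) /= (setIidPr sAB).
suff : 0 <= \sum_(i in B :\: A) l i by move=> h1 h2; lra.
by apply: sumr_ge0 => i _; apply: ltW.
Qed.

Lemma short0 (R : realFieldType) n (l : 'I_n -> R) :
  (0 < n)%N -> positive_lengths l -> short l set0.
Proof.
case: n l => // n l _ hp; rewrite /short big_set0 /totlen.
have : 0 < \sum_(i < n.+1) l i by rewrite big_ord_recl; apply: ltr_pwDl (hp _) _; apply: sumr_ge0 => i _; apply: ltW.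
move=> h; lra.
Qed.

Definition part3 n (t : triple n) : bool :=
  [&& [disjoint t.1.1 & t.1.2], [disjoint t.1.2 & t.2], [disjoint t.1.1 & t.2]
    & t.1.1 :|: t.1.2 :|: t.2 == setT].

Definition allshort (R : realFieldType) n (l : 'I_n -> R) (t : triple n) : bool :=
  [&& short l t.1.1, short l t.1.2 & short l t.2].

Lemma rot3K n (t : triple n) : rot3 (rot3 (rot3 t)) = t.
Proof. by case: t => [[a b] c]. Qed.

Lemma rot3_inj n : injective (@rot3 n).
Proof. by apply: (can_inj (g := fun t => rot3 (rot3 t))) => t; rewrite rot3K. Qed.

Lemma part3_rot n (t : triple n) : part3 (rot3 t) = part3 t.
Proof.
case: t => [[I J] K]; rewrite /part3 /= (disjoint_sym K I).
rewrite (disjoint_sym J I).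
have -> : J :|: K :|: I = I :|: J :|: K by rewrite setUC setUA.
have P (a b c d : bool) : [&& b, c, a & d] = [&& a, b, c & d] by case: a; case: b; case: c.
exact: P.
Qed.

Lemma allshort_rot (R : realFieldType) n (l : 'I_n -> R) (t : triple n) :
  allshort l (rot3 t) = allshort l t.
Proof.
case: t => [[I J] K]; rewrite /allshort /=.
by case: (short l I); case: (short l J); case: (short l K).
Qed.

Lemma long_other (R : realFieldType) n (l : 'I_n -> R) (t : triple n) :
  positive_lengths l -> generic l -> part3 t -> ~~ short l t.1.1 ->
  short l t.1.2 && short l t.2.
Proof.
case: t => [[I J] K] hp hg /and4P[dIJ dJK dIK _] /= nI.
have sC : short l (~: I) by rewrite short_compl.
rewrite !(short_sub hp _ sC) //.
- by rewrite -disjoints_subset disjoint_sym.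
- by rewrite -disjoints_subset disjoint_sym.
Qed.

Lemma exactly_one (R : realFieldType) n (l : 'I_n -> R) (t : triple n) :
  positive_lengths l -> generic l -> part3 t ->
  (allshort l t + ~~ short l t.1.1 + ~~ short l t.1.2 + ~~ short l t.2 = 1)%N.
Proof.
move=> hp hg pt.
have h1 := long_other hp hg pt.
have pt2 : part3 (rot3 t) by rewrite part3_rot.
have h2 := long_other hp hg pt2.
have pt3 : part3 (rot3 (rot3 t)) by rewrite !part3_rot.
have h3 := long_other hp hg pt3.
move: h1 h2 h3; case: t {pt pt2 pt3} => [[I J] K] /=; rewrite /allshort /=.
case: (short l I); case: (short l J); case: (short l K) => //= h1 h2 h3;
  first [by move: (h1 isT) | by move: (h2 isT) | by move: (h3 isT)].
Qed.

Lemma part3_nonempty (R : realFieldType) n (l : 'I_n -> R) (t : triple n) :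
  positive_lengths l -> generic l -> part3 t -> allshort l t -> t.1.1 != set0.
Proof.
case: t => [[I J] K] hp hg /and4P[dIJ dJK dIK /eqP U] /and3P[sI sJ sK] /=.
apply/negP => /eqP I0; subst I.
have : short l (~: K) by apply: (short_sub hp _ sJ); apply/subsetP => x;
  rewrite inE => xK; move/setP: U => /(_ x); rewrite !inE (negbTE xK) orbF /= => ->.
by rewrite short_compl // sK.
Qed.

Lemma adm_eq (R : realFieldType) n (l : 'I_n -> R) (t : triple n) :
  positive_lengths l -> generic l ->
  admissible3 l t = part3 t && allshort l t.
Proof.
move=> hp hg; apply/idP/idP.
  by case: t => [[I J] K]; rewrite /admissible3 /= => /and4P[_ _ _ /and4P[a b c /andP[d e]]]; rewrite /part3 /allshort /= a b c d e.
move=> /andP[pt st].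
have n1 := part3_nonempty hp hg pt st.
have n2 : (rot3 t).1.1 != set0 by apply: part3_nonempty => //; rewrite ?part3_rot ?allshort_rot.
have n3 : (rot3 (rot3 t)).1.1 != set0 by apply: part3_nonempty => //; rewrite ?part3_rot ?allshort_rot.
move: pt st n1 n2 n3; case: t => [[I J] K] /and4P[a b c d] e /= f g h.
by rewrite /admissible3 /= a b c d f g h.
Qed.

Lemma adm_rot (R : realFieldType) n (l : 'I_n -> R) (t : triple n) :
  positive_lengths l -> generic l ->
  admissible3 l (rot3 t) = admissible3 l t.
Proof. by move=> hp hg; rewrite !adm_eq // part3_rot allshort_rot. Qed.

Lemma neq_disj n (A B : {set 'I_n}) : A != set0 -> [disjoint A & B] -> (A == B) = false.
Proof.
move=> nA dAB; apply/negbTE; apply: contra nA => /eqP AB; subst B.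
by move: dAB; rewrite -setI_eq0 setIid.
Qed.

Lemma card_cyc (R : realFieldType) n (l : 'I_n -> R) (t : triple n) :
  admissible3 l t -> #|cyc_class t| = 3%N.
Proof.
case: t => [[I J] K]; rewrite /admissible3 /= => /and4P[nI nJ nK /and4P[dIJ dJK dIK _]].
have e1 := neq_disj nI dIJ. have e2 := neq_disj nJ dJK. have e3 := neq_disj nI dIK.
rewrite eq_sym in e3.
rewrite /cyc_class /rot3 /= setUC cardsU1 cards2 !inE !xpair_eqE /=.
by rewrite (eq_sym I K) e1 e2 e3 !andbF.
Qed.

Lemma cyc_mem n (t x : triple n) : x \in cyc_class t -> cyc_class x = cyc_class t.
Proof.
rewrite /cyc_class !inE => /orP[/orP[]|] /eqP ->; apply/setP => y; rewrite !inE ?rot3K //;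
by case: eqP; case: eqP; case: eqP.
Qed.

Lemma card_vertices (R : realFieldType) n (l : 'I_n -> R) :
  positive_lengths l -> generic l ->
  (#|vertices l| * 3 = #|[set t | admissible3 l t]|)%N.
Proof.
move=> hp hg.
have P : partition (vertices l) [set t | admissible3 l t].
  apply/and3P; split.
  - rewrite /vertices cover_imset; apply/eqP/setP => x; rewrite inE.
    apply/bigcupP/idP.
      case=> t; rewrite inE => at_; rewrite /cyc_class !inE => /orP[/orP[]|] /eqP ->;
      by rewrite ?adm_rot.
    by move=> ax; exists x; rewrite /cyc_class ?inE ?eqxx.
  - apply/trivIsetP => A B /imsetP[t _ ->] /imsetP[s _ ->] neq.
    rewrite -setI_eq0; apply/eqP/setP => x; rewrite in_setI in_set0; apply/negP => /andP[xt xs].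
    by move/eqP: neq; apply; rewrite -(cyc_mem xt) (cyc_mem xs).
  - apply/imsetP => [[t _ e]].
    have : t \in cyc_class t by rewrite /cyc_class !inE eqxx.
    by rewrite -e inE.
rewrite (card_partition P) -sum_nat_const; apply: eq_bigr => A /imsetP[t].
by rewrite inE => at_ ->; rewrite (card_cyc at_).
Qed.

Local Open Scope nat_scope.

Lemma sum_bool (T : finType) (P b : pred T) :
  \sum_(t | P t) (b t : nat) = #|[set t | P t && b t]|.
Proof.
rewrite -sum1dep_card (bigID b) /= [X in _ + X]big1 ?addn0.
  by apply: eq_big => [t|t /andP[_ ->]].
by move=> t /andP[_ /negbTE ->].
Qed.

Definition tr n (f : {ffun 'I_n -> 'I_3}) : triple n :=
  ([set i | (f i : nat) == 0], [set i | (f i : nat) == 1], [set i | (f i : nat) == 2]).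

Lemma tr_inj n : injective (@tr n).
Proof.
move=> f g /= [/setP e0 /setP e1 _]; apply/ffunP => i; apply: val_inj.
move: (e0 i) (e1 i); rewrite !inE; case: (f i) (g i) => [a ha] [b hb] /=.
by move: ha hb; case: a => [|[|[|a]]]; case: b => [|[|[|b]]].
Qed.

Lemma part_tr n : [set t : triple n | part3 t] = [set tr f | f in [set: {ffun 'I_n -> 'I_3}]].
Proof.
apply/setP => t; rewrite inE; apply/idP/imsetP.
- case: t => [[I J] K] /and4P[dIJ dJK dIK /eqP U].
  pose f := [ffun i => if i \in I then @Ordinal 3 0 isT else if i \in J then @Ordinal 3 1 isT
                       else @Ordinal 3 2 isT].
  exists f; rewrite ?inE //.
  have key i : [/\ (i \in I) || (i \in J) || (i \in K), ~~ ((i \in I) && (i \in J)),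
                   ~~ ((i \in J) && (i \in K)) & ~~ ((i \in I) && (i \in K))].
    split.
    + by move/setP: U => /(_ i); rewrite !inE.
    + by apply/negP => /andP[a b]; move: (disjointFr dIJ a); rewrite b.
    + by apply/negP => /andP[a b]; move: (disjointFr dJK a); rewrite b.
    + by apply/negP => /andP[a b]; move: (disjointFr dIK a); rewrite b.
  rewrite /tr; congr (_, _, _); apply/setP => i; rewrite inE ffunE;
  case: (key i); case: (i \in I); case: (i \in J); case: (i \in K) => //.
- case=> f _ ->; rewrite /part3 /tr /=.
  rewrite -!setI_eq0; apply/and4P; split; apply/eqP/setP => i; rewrite !inE //;
  by case: (f i) => [[|[|[|a]]] ha].
Qed.

Lemma card_part n : #|[set t : triple n | part3 t]| = 3 ^ n.
Proof. by rewrite part_tr card_imset ?cardsT ?card_ffun ?card_ord //; exact: tr_inj. Qed.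

Lemma fiber_card n (I : {set 'I_n}) :
  #|[set t : triple n | part3 t && (t.1.1 == I)]| = 2 ^ (n - #|I|).
Proof.
have -> : n - #|I| = #|~: I| by have := cardsC I; rewrite card_ord => e; lia.
rewrite -card_powerset.
have -> : [set t : triple n | part3 t && (t.1.1 == I)] =
          [set (I, J, ~: (I :|: J)) | J in powerset (~: I)].
  apply/setP => t; rewrite inE; apply/idP/imsetP.
  - case: t => [[I' J] K]; rewrite /part3 /= => /andP[/and4P[dIJ dJK dIK /eqP U] /eqP eI]; subst I'.
    exists J; first by rewrite powersetE -disjoints_subset disjoint_sym.
    congr (_, _, _); apply/setP => i; rewrite !inE.
    move/setP: U => /(_ i); rewrite !inE.
    have h1 := @disjointFr _ _ _ i dJK; have h2 := @disjointFr _ _ _ i dIK.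
    move: h1 h2; case: (i \in K); case: (i \in I); case: (i \in J) => //=;
    by [move=> /(_ isT) | move=> _ /(_ isT)].
  - case=> J; rewrite powersetE => sJ ->; rewrite /part3 /= eqxx andbT.
    rewrite (disjoint_sym I J) disjoints_subset sJ /=.
    rewrite -!setI_eq0; apply/and3P; split; apply/eqP/setP => i; rewrite !inE.
    + by case: (i \in I); case: (i \in J).
    + by case: (i \in I); case: (i \in J).
    + by case: (i \in I); case: (i \in J).
by rewrite card_imset // => J1 J2 [].
Qed.

Lemma S1_card (R : realFieldType) n (l : 'I_n -> R) :
  #|[set t : triple n | part3 t && short l t.1.1]| = \sum_(I | short l I) 2 ^ (n - #|I|).
Proof.
rewrite -sum1dep_card (partition_big (fun t : triple n => t.1.1) (short l)) /=;
  last by move=> t /andP[].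
apply: eq_bigr => I sI; rewrite -fiber_card -sum1dep_card; apply: eq_bigl => t.
by case: eqP => [->|_]; rewrite ?sI ?andbF ?andbT.
Qed.

Lemma sum_reorg (R : realFieldType) n (l : 'I_n -> R) :
  \sum_(I | short l I) 2 ^ (n - #|I|) = \sum_(k < n.+1) Nshort l k * 2 ^ (n - k).
Proof.
rewrite (partition_big (fun I : {set 'I_n} => (inord #|I| : 'I_n.+1)) xpredT) //=.
apply: eq_bigr => k _; rewrite /Nshort -sum_nat_const; apply: eq_big => I.
  have cI : #|I| < n.+1 by rewrite ltnS; have := max_card (mem I); rewrite card_ord.
  by rewrite inE -(inj_eq val_inj) /= inordK.
move=> /andP[_ /eqP <-].
have cI : #|I| < n.+1 by rewrite ltnS; have := max_card (mem I); rewrite card_ord.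
by rewrite inordK.
Qed.

Lemma count_split (R : realFieldType) n (l : 'I_n -> R) :
  positive_lengths l -> generic l ->
  let S1 := #|[set t : triple n | part3 t && short l t.1.1]| in
  3 ^ n = #|[set t | admissible3 l t]| + 3 * (3 ^ n - S1) /\ S1 <= 3 ^ n.
Proof.
move=> hp hg S1.
have E : \sum_(t : triple n | part3 t) 1 =
         \sum_(t | part3 t) (allshort l t + ~~ short l t.1.1 + ~~ short l t.1.2 + ~~ short l t.2).
  by apply: eq_bigr => t pt; rewrite exactly_one.
rewrite !big_split /= !sum_bool sum1dep_card card_part in E.
have F : \sum_(t : triple n | part3 t) 1 = \sum_(t | part3 t) (short l t.1.1 + ~~ short l t.1.1).
  by apply: eq_bigr => t pt; case: (short l t.1.1).
rewrite big_split /= !sum_bool sum1dep_card card_part in F.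
have eA : [set t | part3 t && allshort l t] = [set t | admissible3 l t].
  by apply/setP => t; rewrite !inE adm_eq.
have e2 : [set t : triple n | part3 t && ~~ short l t.1.2] =
          @rot3 n @^-1: [set t | part3 t && ~~ short l t.1.1].
  by apply/setP => t; rewrite !inE part3_rot.
have e3 : [set t : triple n | part3 t && ~~ short l t.2] =
          @rot3 n @^-1: [set t | part3 t && ~~ short l t.1.2].
  by apply/setP => t; rewrite !inE part3_rot.
rewrite e3 card_preimset in E; last exact: rot3_inj.
rewrite e2 card_preimset in E; last exact: rot3_inj.
rewrite eA in E.
move: E F; rewrite /S1.
set A := #|[set t | admissible3 l t]|.
set B := #|[set t : triple n | part3 t && ~~ short l t.1.1]|.
set C := #|[set t : triple n | part3 t && short l t.1.1]|.
move=> E F; lia.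
Qed.

Lemma Nshort0 (R : realFieldType) n (l : 'I_n -> R) :
  (0 < n)%N -> positive_lengths l -> Nshort l 0 = 1%N.
Proof.
move=> n0 hp; rewrite /Nshort.
have -> : [set I : {set 'I_n} | short l I & #|I| == 0%N] = [set set0].
  apply/setP => I; rewrite !inE cards_eq0; case: eqP => [->|]; by rewrite ?short0 ?andbF.
by rewrite cards1.
Qed.

Theorem mainTheorem1 (R : realFieldType) (n : nat) (l : 'I_n -> R)
  (hn : (4 <= n)%N)
  (hpos : positive_lengths l)
  (htri : strict_triangle l)
  (hgen : generic l) :
  (#|vertices l|%:Z =
     (\sum_(1 <= k < n.+1) Nshort l k * 2 ^ (n - k))%:Z
     - 2 * 3 ^+ (n - 1) + 2 ^+ n)%R.
Proof.
move: (count_split hpos hgen) => /= [E Sle].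
have V := card_vertices hpos hgen.
rewrite S1_card sum_reorg in E Sle.
have Z : (\sum_(k < n.+1) Nshort l k * 2 ^ (n - k) =
          2 ^ n + \sum_(1 <= k < n.+1) Nshort l k * 2 ^ (n - k))%N.
  rewrite -(big_mkord xpredT (fun k => Nshort l k * 2 ^ (n - k))%N) big_ltn //.
  by rewrite Nshort0 ?mul1n ?subn0 //; lia.
rewrite Z -V in E Sle.
set S := \sum_(1 <= k < n.+1) _ in E Sle *.
have e3 : (3 ^ n = 3 * 3 ^ (n - 1))%N by rewrite -expnS; congr (_ ^ _); lia.
have -> : (3 ^+ (n - 1) : int) = (3 ^ (n - 1))%N%:Z by rewrite -natrX natz.
have -> : (2 ^+ n : int) = (2 ^ n)%N%:Z by rewrite -natrX natz.
move: E Sle V e3; set a := (3 ^ (n - 1))%N; set b := (2 ^ n)%N; set c := (3 ^ n)%N.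
move=> E Sle V e3; clearbody S a b c.
have h : (#|vertices l| + 2 * a = S + b)%N by lia.
have -> : (2 * Posz a = Posz (2 * a))%R by rewrite PoszM.
by rewrite addrAC -PoszD -h PoszD addrK.
Qed.
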